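(* Let $\lambda_1\ge\lambda_2\ge 2$ and $h_1\ge h_2\ge2$ be integers, let $h_1\le m\le h_1+h_2+\lambda_2-3$, and set $m'=\lambda_1+\lambda_2+h_1+h_2-3-m$. Then $$\frac{\lambda_1-\lambda_2+1}{m-h_2+1}\binom{\lambda_1+h_1-2}{m-h_2}\binom{\lambda_2+h_1-3}{m-h_2}\binom{m-h_2}{m-h_1}\binom{\lambda_2+h_2-4}{h_2-2}\binom{\lambda_1+h_2-3}{h_2-2}\frac{1}{\binom{h_1-1}{h_2-2}}$$ $$=\frac{h_1-h_2+1}{m'-\lambda_2+1}\binom{h_1+\lambda_1-2}{m'-\lambda_2}\binom{h_2+\lambda_1-3}{m'-\lambda_2}\binom{m'-\lambda_2}{m'-\lambda_1}\binom{h_1+\lambda_2-3}{\lambda_2-2}\binom{h_2+\lambda_2-4}{\lambda_2-2}\frac{1}{\binom{\lambda_1-1}{\lambda_2-2}}.$$ *)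

(* Defs.v *)
From HB Require Import structures.
From mathcomp Require Import all_boot all_order all_algebra.

(* Main.v *)
Require Import Defs.
From HB Require Import structures.
From mathcomp Require Import all_boot all_order all_algebra.
From mathcomp Require Import zify ring.
Import GRing.Theory Num.Theory.
Local Open Scope ring_scope.

Lemma binR (x y : nat) :
  ('C(x + y, x)%:R : rat) = (x + y)`!%:R / (x`!%:R * y`!%:R).
Proof.
have := bin_fact (leq_addr y x). rewrite addKn => H.
rewrite -H !natrM mulfK // mulf_neq0 // pnatr_eq0 -lt0n fact_gt0 //.
Qed.

Lemma factR (x : nat) : ((x + 1)`!%:R : rat) = (x + 1)%:R * x`!%:R.
Proof. by rewrite addn1 factS natrM. Qed.

Lemma fnz (x : nat) : (x`!%:R : rat) != 0.
Proof. by rewrite pnatr_eq0 -lt0n fact_gt0. Qed.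

Lemma snz (x : nat) : ((x + 1)%:R : rat) != 0.
Proof. by rewrite pnatr_eq0 addn1. Qed.

Theorem proposition4p2 (l1 l2 h1 h2 m : nat)
  (Hl : (l2 <= l1)%N) (Hl2 : (2 <= l2)%N)
  (Hh : (h2 <= h1)%N) (Hh2 : (2 <= h2)%N)
  (Hm1 : (h1 <= m)%N) (Hm2 : (m <= h1 + h2 + l2 - 3)%N) :
  let m' := (l1 + l2 + h1 + h2 - 3 - m)%N in
  ((l1 - l2 + 1)%N%:R / (m - h2 + 1)%N%:R : rat)
    * 'C(l1 + h1 - 2, m - h2)%:R * 'C(l2 + h1 - 3, m - h2)%:R
    * 'C(m - h2, m - h1)%:R * 'C(l2 + h2 - 4, h2 - 2)%:R
    * 'C(l1 + h2 - 3, h2 - 2)%:R / 'C(h1 - 1, h2 - 2)%:R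
  = ((h1 - h2 + 1)%N%:R / (m' - l2 + 1)%N%:R : rat)
    * 'C(h1 + l1 - 2, m' - l2)%:R * 'C(h2 + l1 - 3, m' - l2)%:R
    * 'C(m' - l2, m' - l1)%:R * 'C(h1 + l2 - 3, l2 - 2)%:R
    * 'C(h2 + l2 - 4, l2 - 2)%:R / 'C(l1 - 1, l2 - 2)%:R.
Proof.
move=> m'; rewrite /m'.
have [b Eb] : exists b, l2 = (b + 2)%N by exists (l2 - 2)%N; lia.
have [q Eq] : exists q, h2 = (q + 2)%N by exists (h2 - 2)%N; lia.
have [d Ed] : exists d, l1 = (b + 2 + d)%N by exists (l1 - l2)%N; lia.
have [e Ee] : exists e, h1 = (q + 2 + e)%N by exists (h1 - h2)%N; lia.
have [k Ek] : exists k, m = (q + 2 + e + k)%N by exists (m - h1)%N; lia.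
have [j Ej] : exists j, (k + j = q + b + 1)%N by exists (q + b + 1 - k)%N; lia.
subst.
have -> : (b + 2 + d - (b + 2) + 1 = d + 1)%N by lia.
have -> : (q + 2 + e + k - (q + 2) + 1 = e + k + 1)%N by lia.
have -> : 'C(b + 2 + d + (q + 2 + e) - 2, q + 2 + e + k - (q + 2))
   = 'C((e + k) + (d + j + 1), e + k) by congr binomial; lia.
have -> : 'C(b + 2 + (q + 2 + e) - 3, q + 2 + e + k - (q + 2))
   = 'C((e + k) + j, e + k) by congr binomial; lia.
have -> : 'C(q + 2 + e + k - (q + 2), q + 2 + e + k - (q + 2 + e))
   = 'C(k + e, k) by congr binomial; lia.
have -> : 'C(b + 2 + (q + 2) - 4, q + 2 - 2) = 'C(q + b, q) by congr binomial; lia.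
have -> : 'C(b + 2 + d + (q + 2) - 3, q + 2 - 2) = 'C(q + (b + d + 1), q)
  by congr binomial; lia.
have -> : 'C(q + 2 + e - 1, q + 2 - 2) = 'C(q + (e + 1), q) by congr binomial; lia.
have -> : (q + 2 + e - (q + 2) + 1 = e + 1)%N by lia.
have -> : (b + 2 + d + (b + 2) + (q + 2 + e) + (q + 2) - 3 - (q + 2 + e + k)
   - (b + 2) + 1 = d + j + 1)%N by lia.
have -> : 'C(q + 2 + e + (b + 2 + d) - 2,
   b + 2 + d + (b + 2) + (q + 2 + e) + (q + 2) - 3 - (q + 2 + e + k) - (b + 2))
   = 'C((d + j) + (e + k + 1), d + j) by congr binomial; lia.
have -> : 'C(q + 2 + (b + 2 + d) - 3,
   b + 2 + d + (b + 2) + (q + 2 + e) + (q + 2) - 3 - (q + 2 + e + k) - (b + 2))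
   = 'C((d + j) + k, d + j) by congr binomial; lia.
have -> : 'C(b + 2 + d + (b + 2) + (q + 2 + e) + (q + 2) - 3 - (q + 2 + e + k) - (b + 2),
   b + 2 + d + (b + 2) + (q + 2 + e) + (q + 2) - 3 - (q + 2 + e + k) - (b + 2 + d))
   = 'C(j + d, j) by congr binomial; lia.
have -> : 'C(q + 2 + e + (b + 2) - 3, b + 2 - 2) = 'C(b + (q + e + 1), b)
  by congr binomial; lia.
have -> : 'C(q + 2 + (b + 2) - 4, b + 2 - 2) = 'C(b + q, b) by congr binomial; lia.
have -> : 'C(b + 2 + d - 1, b + 2 - 2) = 'C(b + (d + 1), b) by congr binomial; lia.
rewrite !binR.
have -> : (e + k + (d + j + 1) = d + j + (e + k + 1))%N by lia.
have -> : (e + k + j = b + (q + e + 1))%N by lia.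
have -> : (k + e = e + k)%N by lia.
have -> : (q + b = b + q)%N by lia.
have -> : (q + (b + d + 1) = d + j + k)%N by lia.
have -> : (q + (e + 1) = q + e + 1)%N by lia.
have -> : (j + d = d + j)%N by lia.
have -> : (b + (d + 1) = b + d + 1)%N by lia.
rewrite !factR.
field.
by rewrite !fnz -!natrD -[1]/(1%:R) -!natrD !pnatr_eq0 !addn1.
Qed.
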